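(* Assume $m\le n$. Then there do not exist distinct Generalized Nash equilibria $\mathbf{x}=(\mathbf{x}_1,\dots,\mathbf{x}_n)$ and $\mathbf{y}=(\mathbf{y}_1,\dots,\mathbf{y}_n)$ of $G^{(2)}$ such that $\mathbf{x}_T^{(j)}\le\mathbf{y}_T^{(j)}$ for all $j\in[m]$ and $\sum_{j\in[m]}\mathbf{x}_T^{(j)}<\sum_{j\in[m]}\mathbf{y}_T^{(j)}$.
   Context: $G^{(2)}$ is a Fragile multi-CPR Game with $n\ge1$ players and $m\ge1$ CPRs: $[k]=\{1,\dots,k\}$, $C_m=\{(x_1,\dots,x_m)\in[0,1]^m:\sum_j x_j\le1\}$, $\mathcal{C}_n=\prod_{i\in[n]}C_m$, $\mathcal{C}_{-i}=\prod_{[n]\setminus\{i\}}C_m$. A profile is $\mathbf{x}=(\mathbf{x}_1,\dots,\mathbf{x}_n)$, $\mathbf{x}_i=(x_{i1},\dots,x_{im})$; write $\mathbf{x}=(\mathbf{x}_i,\mathbf{x}_{-i})$; $\mathbf{x}_T^{(j)}=\sum_i x_{ij}$, $\mathbf{x}_T^{j|i}=\sum_{\ell\ne i}x_{\ell j}$. Each CPR $j$ has return rate $\mathcal{R}_j(t)>1$ and failure probability $p_j(t)\in[0,1]$; each player $i$ has parameters $a_i,k_i$. $\mathcal{F}_{ij}(t)=(\mathcal{R}_j(t)-1)^{a_i}(1-p_j(t))-k_ip_j(t)$; utility $\mathcal{V}_i(\mathbf{x}_i;\mathbf{x}_{-i})=\sum_j x_{ij}^{a_i}\mathcal{F}_{ij}(\mathbf{x}_T^{(j)})$.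 Assumption: (1) $p_j(0)=0$, $p_j(t)=1$ for $t\ge1$; (2) $a_i\in(0,1]$, $k_i>0$; (3) each $\mathcal{F}_{ij}$ (continuous on $[0,1]$) has strictly negative first and second derivatives on $(0,1)$. $\omega_{ij}\in(0,1)$ is the unique zero of $\mathcal{F}_{ij}$ in $(0,1)$. $A(\mathbf{x}_{-i})=\{j:\mathbf{x}_T^{j|i}<\omega_{ij}\}$. $\vartheta_i(\mathbf{x}_{-i})=C_m\cap\big(\prod_{j\in A(\mathbf{x}_{-i})}[0,\omega_{ij}-\mathbf{x}_T^{j|i}]\times\prod_{j\notin A(\mathbf{x}_{-i})}\{0\}\big)$. A Generalized Nash equilibrium is $\mathbf{x}\in\mathcal{C}_n$ with, for all $i$, $\mathbf{x}_i\in\vartheta_i(\mathbf{x}_{-i})$ and $\mathcal{V}_i(\mathbf{x}_i;\mathbf{x}_{-i})\ge\mathcal{V}_i(\mathbf{z};\mathbf{x}_{-i})$ for all $\mathbf{z}\in\vartheta_i(\mathbf{x}_{-i})$. *)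

(* Defs.v *)
From HB Require Import structures.
From mathcomp Require Import all_boot all_order all_algebra.
From mathcomp Require Import all_classical all_reals all_analysis.
Set Implicit Arguments. Unset Strict Implicit. Unset Printing Implicit Defensive.
Import Order.TTheory GRing.Theory Num.Theory.
Local Open Scope ring_scope.

Section FragileCPR.
Variables (R : realType) (n m : nat).

(* A profile: x i j = investment of player i in CPR j. *)
Definition profile := 'I_n -> 'I_m -> R.

Definition in_Cm (z : 'I_m -> R) : Prop :=
  (forall j, 0 <= z j <= 1) /\ \sum_(j < m) z j <= 1.

Definition in_Cn (x : profile) : Prop := forall i, in_Cm (x i).

Definition xT (x : profile) (j : 'I_m) : R := \sum_(i < n) x i j.

Definition xT_but (x : profile) (i : 'I_n) (j : 'I_m) : R :=
  \sum_(l < n | l != i) x l j.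

Definition upd (x : profile) (i : 'I_n) (z : 'I_m -> R) : profile :=
  fun l => if l == i then z else x l.

Definition Fij (Rr p : 'I_m -> R -> R) (a k : 'I_n -> R)
  (i : 'I_n) (j : 'I_m) (t : R) : R :=
  (Rr j t - 1) `^ (a i) * (1 - p j t) - k i * p j t.

Definition Vi (Rr p : 'I_m -> R -> R) (a k : 'I_n -> R)
  (i : 'I_n) (x : profile) : R :=
  \sum_(j < m) (x i j) `^ (a i) * Fij Rr p a k i j (xT x j).

(* vartheta_i(x_{-i}); omega i j is the unique zero of F_{ij} in (0,1) *)
Definition in_vartheta (omega : 'I_n -> 'I_m -> R) (x : profile) (i : 'I_n)
  (z : 'I_m -> R) : Prop :=
  in_Cm z /\
  forall j : 'I_m,
    if xT_but x i j < omega i j then 0 <= z j <= omega i j - xT_but x i j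
    else z j == 0.

Definition is_GNE (Rr p : 'I_m -> R -> R) (a k : 'I_n -> R)
  (omega : 'I_n -> 'I_m -> R) (x : profile) : Prop :=
  in_Cn x /\
  forall i : 'I_n,
    in_vartheta omega x i (x i) /\
    forall z : 'I_m -> R, in_vartheta omega x i z ->
      Vi Rr p a k i (upd x i z) <= Vi Rr p a k i x.

End FragileCPR.

(* Main.v *)
Require Import Defs.
From HB Require Import structures.
From mathcomp Require Import all_boot all_order all_algebra.
From mathcomp Require Import all_classical all_reals all_analysis.
Import Order.TTheory GRing.Theory Num.Theory numFieldNormedType.Exports.
Local Open Scope ring_scope.
Local Open Scope classical_set_scope.
From mathcomp Require Import ring lra.

Lemma rmax_derive (R : realType) (f : R -> R) (c e : R) : 0 < e ->
  derivable f c 1 -> (forall h, 0 < h < e -> f (c + h) <= f c) -> 'D_1 f c <= 0.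
Proof.
move=> e0 fd cmax.
  rewrite ['D_1 f c]cvg_at_rightE; last exact: fd.
  apply: limr_le.
    rewrite -(cvg_at_rightE (fun h : R => h^-1 *: ((f \o shift c) _ - f c))) //.
    apply: cvg_trans fd; apply: cvg_app.
    move=> A [e' egt0 Ae]; exists e' => // x xe xgt0; apply: Ae => //.
    exact/lt0r_neq0.
  near=> h; apply: mulr_ge0_le0.
    by rewrite invr_ge0; apply: ltW; near: h; exists 1 => /=.
  rewrite subr_le0 [_%:A]mulr1 /= addrC; apply: cmax; near: h.
  exists e => //= h; rewrite /= distrC subr0 => /(le_lt_trans (ler_norm _)) he h0.
  by rewrite h0 he.
Unshelve. all: by end_near. Qed.

Lemma lmax_derive (R : realType) (f : R -> R) (c e : R) : 0 < e ->
  derivable f c 1 -> (forall h, 0 < h < e -> f (c - h) <= f c) -> 0 <= 'D_1 f c.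
Proof.
move=> e0 fd cmax.
rewrite ['D_1 f c]cvg_at_leftE; last exact: fd.
apply: limr_ge.
  rewrite -(cvg_at_leftE (fun h => h^-1 *: ((f \o shift c) _ - f c))) //.
  apply: cvg_trans fd; apply: cvg_app.
  move=> A [e' egt0 Ae]; exists e' => // x xe xgt0; apply: Ae => //.
  exact/ltr0_neq0.
near=> h; apply: mulr_le0.
  by rewrite invr_le0; apply: ltW; near: h; exists 1 => /=.
rewrite subr_le0 [_%:A]mulr1 /= addrC.
have -> : c + h = c - (- h) by rewrite opprK.
apply: cmax; near: h.
exists e => //= h; rewrite /= distrC subr0 => /ltr_normlP [] h1 h2 h0.
by rewrite oppr_gt0 h0 /=.
Unshelve. all: by end_near. Qed.

Lemma shift_derive (R : realType) (F : R -> R) (s u : R) :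
  derivable F (u + s) 1 -> is_derive u 1 (fun w => F (w + s)) (derive1 F (u + s)).
Proof.
move=> dF.
have hs : is_derive u 1 (fun w : R => w + s) 1.
  have H := is_deriveD (is_derive_id u 1) (is_derive_cst s u 1).
  rewrite addr0 in H; exact H.
have ds : derivable (fun w : R => w + s) u 1 by case: hs.
apply: DeriveDef.
  apply/derivable1_diffP; apply: (differentiable_comp (f := fun w : R => w + s) (g := F)).
    exact/derivable1_diffP.
  exact/derivable1_diffP.
rewrite -derive1E.
have -> : (fun w => F (w + s)) = F \o (fun w => w + s) by [].
rewrite derive1_comp //.
by rewrite [X in _ * X]derive1E (@derive_val _ _ _ _ _ _ _ hs) mulr1.
Qed.

Lemma phi_derive (R : realType) (F : R -> R) (a s u : R) : 0 < u -> derivable F (u + s) 1 ->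
  is_derive u 1 (fun w => w `^ a * F (w + s))
    (u `^ a * derive1 F (u + s) + F (u + s) * (a * u `^ (a - 1))).
Proof.
move=> u0 dF.
have h1 := is_derive1_powR a u0.
have h2 := @shift_derive _ F s u dF.
have := is_deriveM h1 h2.
by [].
Qed.

Lemma F_lt (R : realType) (F : R -> R) :
  {within `[0, 1], continuous F} ->
  (forall t, 0 < t < 1 -> derivable F t 1 /\ derive1 F t < 0) ->
  forall z1 z2, 0 <= z1 -> z1 < z2 -> z2 <= 1 -> F z2 < F z1.
Proof.
move=> cF dF z1 z2 h1 h2 h3.
apply: (ltr0_derive1_decr _ _ cF) => //.
- by move=> t; rewrite in_itv /= => /dF [].
- by move=> t; rewrite in_itv /= => /dF [].
Qed.

Lemma F_le (R : realType) (F : R -> R) :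
  {within `[0, 1], continuous F} ->
  (forall t, 0 < t < 1 -> derivable F t 1 /\ derive1 F t < 0) ->
  forall z1 z2, 0 <= z1 -> z1 <= z2 -> z2 <= 1 -> F z2 <= F z1.
Proof.
move=> cF dF z1 z2 h1; rewrite le_eqVlt => /orP [/eqP -> //| h2] h3.
by apply: ltW; apply: F_lt.
Qed.

Lemma Fd_le (R : realType) (F : R -> R) :
  (forall t, 0 < t < 1 -> derivable (derive1 F) t 1 /\ derive1n 2 F t < 0) ->
  forall z1 z2, 0 < z1 -> z1 <= z2 -> z2 < 1 -> derive1 F z2 <= derive1 F z1.
Proof.
move=> hd z1 z2 h1 h2 h3.
apply: (ler0_derive1_nincr (f := derive1 F) (a := z1) (b := z2)) => //.
- move=> t; rewrite in_itv /= => /andP [t1 t2].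
  by apply: (hd t _).1; apply/andP; split; lra.
- move=> t; rewrite in_itv /= => /andP [t1 t2].
  have [|_ H] := hd t; first by apply/andP; split; lra.
  exact: ltW H.
- apply: derivable_within_continuous => t; rewrite in_itv /= => /andP [t1 t2].
  by apply: (hd t _).1; apply/andP; split; lra.
Qed.

Section Helpers.
Set Implicit Arguments.
Context (R : realType) (n m : nat) (Rr p : 'I_m -> R -> R) (a k : 'I_n -> R)
  (omega : 'I_n -> 'I_m -> R).

Lemma xT_upd (x : profile R n m) i z j : xT (upd x i z) j = z j + xT_but x i j.
Proof.
rewrite /xT (bigD1 i) //= /upd eqxx; congr (_ + _).
by rewrite /xT_but; apply: eq_bigr => l /negbTE ->.
Qed.

Lemma upd_self (x : profile R n m) i : upd x i (x i) = x.
Proof. by apply/funext => l; rewrite /upd; case: eqVneq => [->|]. Qed.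

Lemma xT_split (x : profile R n m) i j : xT x j = x i j + xT_but x i j.
Proof. by rewrite -{1}(upd_self x i) xT_upd. Qed.

Lemma Vi_upd (x : profile R n m) i z : Vi Rr p a k i (upd x i z) =
  \sum_(j < m) (z j) `^ (a i) * Fij Rr p a k i j (z j + xT_but x i j).
Proof. by rewrite /Vi; apply: eq_bigr => j _; rewrite xT_upd /upd eqxx. Qed.

Definition repl (x : profile R n m) i j (w : R) : 'I_m -> R :=
  fun j' => if j' == j then w else x i j'.

Lemma dev (x : profile R n m) i j w :
  Vi Rr p a k i (upd x i (repl x i j w)) <= Vi Rr p a k i x ->
  w `^ (a i) * Fij Rr p a k i j (w + xT_but x i j) <=
  x i j `^ (a i) * Fij Rr p a k i j (x i j + xT_but x i j).
Proof.
rewrite Vi_upd; have := Vi_upd x i (x i); rewrite upd_self => ->.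
rewrite (bigD1 j) //= [X in _ <= X](bigD1 j) //=.
have -> : \sum_(j' < m | j' != j)
    (repl x i j w j') `^ a i * Fij Rr p a k i j' (repl x i j w j' + xT_but x i j') =
  \sum_(j' < m | j' != j) (x i j') `^ a i * Fij Rr p a k i j' (x i j' + xT_but x i j').
  by apply: eq_bigr => j' /negbTE hj; rewrite /repl hj.
by rewrite /repl eqxx lerD2r.
Qed.

Lemma feas (x : profile R n m) i j w : in_Cn x -> in_vartheta omega x i (x i) ->
  0 <= w -> w <= 1 -> \sum_(j' < m) x i j' - x i j + w <= 1 ->
  xT_but x i j < omega i j -> w <= omega i j - xT_but x i j ->
  in_vartheta omega x i (repl x i j w).
Proof.
move=> cx [_ vx] w0 w1 hs hlt hle; split; [split|].
- move=> j'; rewrite /repl; case: eqVneq => [_|_]; last exact: ((cx i).1 j').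
  by rewrite w0 w1.
- rewrite (bigD1 j) //= /repl eqxx; rewrite (bigD1 j) //= in hs.
  have -> : \sum_(j' < m | j' != j) (if j' == j then w else x i j') =
            \sum_(j' < m | j' != j) x i j' by apply: eq_bigr => j' /negbTE ->.
  lra.
- move=> j'; rewrite /repl; case: eqVneq => [->|_]; last exact: vx j'.
  by rewrite hlt w0 hle.
Qed.

End Helpers.
Unset Implicit Arguments.
Theorem lemma8 (R : realType) (n m : nat)
  (Rr p : 'I_m -> R -> R) (a k : 'I_n -> R) (omega : 'I_n -> 'I_m -> R)
  (hn : (0 < n)%N) (hm : (0 < m)%N) (hmn : (m <= n)%N)
  (hR : forall j t, 1 < Rr j t)
  (hp01 : forall j t, 0 <= p j t <= 1)
  (hp0 : forall j, p j 0 = 0)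
  (hp1 : forall j t, 1 <= t -> p j t = 1)
  (ha : forall i, 0 < a i <= 1)
  (hk : forall i, 0 < k i)
  (hFcont : forall i j, {within `[0, 1], continuous (Fij Rr p a k i j : R -> R)})
  (hFd1 : forall i j t, 0 < t < 1 ->
     derivable (Fij Rr p a k i j) t 1 /\ (Fij Rr p a k i j)^`() t < 0)
  (hFd2 : forall i j t, 0 < t < 1 ->
     derivable ((Fij Rr p a k i j)^`()) t 1 /\ (Fij Rr p a k i j)^`(2) t < 0)
  (homega : forall i j, 0 < omega i j < 1 /\ Fij Rr p a k i j (omega i j) = 0) :
  ~ exists x y : profile R n m,
      [/\ is_GNE Rr p a k omega x, is_GNE Rr p a k omega y, x <> y,
          (forall j, xT x j <= xT y j) &
          \sum_(j < m) xT x j < \sum_(j < m) xT y j].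
Proof.
Proof.
case=> x [y [gx gy xy hle hlt]].
case: gx => cx gx; case: gy => cy gy.
have [i hi] : exists i, \sum_(j < m) x i j < \sum_(j < m) y i j.
  case: (boolP [exists i, \sum_(j < m) x i j < \sum_(j < m) y i j]) => [/existsP //|/existsPn H].
  exfalso; move: hlt; apply/negP; rewrite -leNgt /xT exchange_big [X in _ <= X]exchange_big /=.
  by apply: ler_sum => i _; rewrite leNgt H.
have [j hj] : exists j, x i j < y i j.
  case: (boolP [exists j, x i j < y i j]) => [/existsP //|/existsPn H].
  exfalso; move: hi; apply/negP; rewrite -leNgt.
  by apply: ler_sum => j _; rewrite leNgt H.
case: (gx i) => vx optx; case: (gy i) => vy opty.
have /andP [A0 A1] := ha i.
have [/andP [w0p w0l1] Fw0] := homega i j.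
have /andP [hu0 hu1] := (cx i).1 j.
have /andP [hv0 hv1] := (cy i).1 j.
have hsy1 := (cy i).2.
have hv : 0 < y i j by apply: le_lt_trans hu0 hj.
have hs0 : 0 <= xT_but x i j.
  by rewrite /xT_but; apply: sumr_ge0 => l _; case/andP: ((cx l).1 j).
have ht0 : 0 <= xT_but y i j.
  by rewrite /xT_but; apply: sumr_ge0 => l _; case/andP: ((cy l).1 j).
have [ht hvt] : xT_but y i j < omega i j /\ y i j <= omega i j - xT_but y i j.
  move: (vy.2 j); case: ifP => [h /andP [_ h2] | _ /eqP h]; first by [].
  by move: hv; rewrite h ltxx.
have hFpos : forall z, 0 <= z -> z < omega i j -> 0 < Fij Rr p a k i j z.
  move=> z z0 zw; rewrite -Fw0; apply: (@F_lt _ _ (hFcont i j) (hFd1 i j)) => //; lra.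
have hTy : y i j + xT_but y i j < omega i j.
  rewrite lt_neqAle; apply/andP; split; last lra.
  apply/eqP => E.
  have Fe : in_vartheta omega y i (repl y i j (y i j / 2)).
    apply: (@feas _ _ _ omega y i j (y i j / 2) cy vy) => //; lra.
  have H := @dev _ _ _ Rr p a k _ _ _ _ (opty _ Fe).
  have : 0 < (y i j / 2) `^ a i * Fij Rr p a k i j (y i j / 2 + xT_but y i j).
    apply: mulr_gt0; first by apply: powR_gt0; lra.
    apply: hFpos; lra.
  move: H; rewrite E Fw0 mulr0; lra.
have hTx : x i j + xT_but x i j <= y i j + xT_but y i j.
  by rewrite -!xT_split; exact: hle j.
have hslt : xT_but x i j < omega i j by lra.
have hd : 0 < 1 - \sum_(j0 < m) x i j0 by lra.
set e := Num.min (omega i j - (x i j + xT_but x i j)) (1 - \sum_(j0 < m) x i j0).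
have e0 : 0 < e by rewrite lt_min; apply/andP; split; lra.
have e1 : e <= omega i j - (x i j + xT_but x i j) by rewrite /e ge_min lexx.
have e2 : e <= 1 - \sum_(j0 < m) x i j0 by rewrite /e ge_min lexx orbT.
have devx : forall w, x i j <= w -> w <= x i j + e ->
   w `^ a i * Fij Rr p a k i j (w + xT_but x i j) <=
   x i j `^ a i * Fij Rr p a k i j (x i j + xT_but x i j).
  move=> w h1 h2; apply: dev; apply: optx;
    apply: (@feas _ _ _ omega x i j w cx vx) => //; lra.
case: (eqVneq (x i j) 0) => [u0|unz].
  have H := devx (e / 2) ltac:(lra) ltac:(lra).
  rewrite u0 powR0 ?mul0r in H; last exact: lt0r_neq0.
  have : 0 < (e / 2) `^ a i * Fij Rr p a k i j (e / 2 + xT_but x i j).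
    apply: mulr_gt0; first by apply: powR_gt0; lra.
    apply: hFpos; lra.
  lra.
have upos : 0 < x i j by rewrite lt_neqAle eq_sym unz hu0.
have hdx := @phi_derive _ (Fij Rr p a k i j) (a i) (xT_but x i j) (x i j) upos
   (hFd1 i j (x i j + xT_but x i j) ltac:(apply/andP; split; lra)).1.
have hdy := @phi_derive _ (Fij Rr p a k i j) (a i) (xT_but y i j) (y i j) hv
   (hFd1 i j (y i j + xT_but y i j) ltac:(apply/andP; split; lra)).1.
case: hdx => dx Dx; case: hdy => dy Dy.
have D1 := @rmax_derive _ _ _ e e0 dx.
rewrite Dx in D1.
have {D1} D1 := D1 (fun h hh => devx (x i j + h) ltac:(case/andP: hh; lra) ltac:(case/andP: hh; lra)).
have D2 := @lmax_derive _ _ _ (y i j) hv dy.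
rewrite Dy in D2.
have {D2} D2 := D2 (fun h hh => @dev _ _ _ Rr p a k _ _ _ _ (opty _ (@feas _ _ _ omega y i j (y i j - h) cy vy
   ltac:(case/andP: hh; lra) ltac:(case/andP: hh; lra) ltac:(case/andP: hh; lra) ht
   ltac:(case/andP: hh; lra)))).
have E1 : forall u, 0 < u -> u `^ a i = u `^ (a i - 1) * u.
  move=> u u0.
  rewrite [in LHS](_ : a i = a i - 1 + 1); last by rewrite subrK.
  rewrite powRD; last by apply/implyP => _; exact: lt0r_neq0.
  by rewrite powRr1 //; exact: ltW.
set Fx := Fij Rr p a k i j (x i j + xT_but x i j) in D1.
set Fy := Fij Rr p a k i j (y i j + xT_but y i j) in D2.
set dFx := derive1 (Fij Rr p a k i j) (x i j + xT_but x i j) in D1.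
set dFy := derive1 (Fij Rr p a k i j) (y i j + xT_but y i j) in D2.
have k1 : x i j * dFx + a i * Fx <= 0.
  have Q : x i j `^ a i * dFx + Fx * (a i * x i j `^ (a i - 1)) =
      x i j `^ (a i - 1) * (x i j * dFx + a i * Fx) by rewrite (E1 _ upos); ring.
  by rewrite Q pmulr_rle0 ?powR_gt0 in D1.
have k2 : 0 <= y i j * dFy + a i * Fy.
  have Q : y i j `^ a i * dFy + Fy * (a i * y i j `^ (a i - 1)) =
      y i j `^ (a i - 1) * (y i j * dFy + a i * Fy) by rewrite (E1 _ hv); ring.
  by rewrite Q pmulr_rge0 ?powR_gt0 in D2.
have k3 : dFy <= dFx.
  apply: (@Fd_le _ _ (hFd2 i j)); lra.
have k4 : Fy <= Fx.
  apply: (@F_le _ _ (hFcont i j) (hFd1 i j)); lra.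
have k5 : dFy < 0 by apply: (hFd1 i j _ _).2; apply/andP; split; lra.
have k6 : 0 < Fy by apply: hFpos; lra.
have p1 : a i * Fy <= a i * Fx by rewrite ler_pM2l.
have p2 : x i j * dFy <= x i j * dFx by rewrite ler_pM2l.
have p3 : y i j * dFy < x i j * dFy by rewrite ltr_nM2r.
clear -k1 k2 p1 p2 p3.
lra.
Qed.
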